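(* For every integer $n\ge0$, $$\mathcal{B}_{n,1}=\sum_{k=0}^{n}\binom{n}{k}\frac{\phi_{k+1}B_{n-k}}{k+1}.$$
   Context: $\phi_m$ denotes the $m$-th Bell number (number of set partitions of an $m$-set). $B_m$ denotes the $m$-th Bernoulli number, defined by $\sum_{m\ge0}B_m\frac{z^m}{m!}=\frac{z}{e^z-1}$. The $1$-Bell numbers $\mathcal{B}_{n,1}$ are defined by $\sum_{n\ge0}\mathcal{B}_{n,1}\frac{z^n}{n!}=\sum_{n\ge0}\frac{(e^z-1)^n}{(n+1)!}=\frac{\exp(e^z-1)-1}{e^z-1}$. *)

(* Defs.v *)
From mathcomp Require Import all_boot all_order all_algebra.
Set Implicit Arguments. Unset Strict Implicit. Unset Printing Implicit Defensive.
Import Order.TTheory GRing.Theory Num.Theory.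
Local Open Scope ring_scope.

Definition bell (m : nat) : nat :=
  #|[set P : {set {set 'I_m}} | partition P [set: 'I_m]]|.

Definition fps := nat -> rat.
Definition fps_mul (a b : fps) : fps :=
  fun n => \sum_(k < n.+1) a k * b (n - k)%N.
Definition fps_pow (a : fps) (j : nat) : fps :=
  iter j (fps_mul a) (fun n => if n == 0%N then 1 else 0).
Definition fps_X : fps := fun n => if n == 1%N then 1 else 0.
Definition fps_expm1 : fps := fun n => if n == 0%N then 0 else (n`!%:R)^-1.
Definition egf (u : nat -> rat) : fps := fun m => u m / (m`!)%:R.

(* 1-Bell numbers: B_{n,1} = n! [z^n] sum_{j>=0} (e^z-1)^j/(j+1)!.
   Since e^z-1 has zero constant term, only j <= n contribute to [z^n]. *)
Definition bell1 (n : nat) : rat :=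
  (n`!)%:R * \sum_(j < n.+1) fps_pow fps_expm1 j n / ((j.+1)`!)%:R.

(* B is the Bernoulli sequence: sum_m B_m z^m/m! = z/(e^z-1),
   i.e. (e^z - 1) * (sum_m B_m z^m/m!) = z as formal power series
   (this determines B uniquely since e^z-1 = z + O(z^2)). *)
Definition is_bernoulli (B : nat -> rat) : Prop :=
  forall n, fps_mul fps_expm1 (egf B) n = fps_X n.

(* Main.v *)
Require Import Defs.
From mathcomp Require Import all_boot all_order all_algebra.
From mathcomp Require Import zify ring.
Set Implicit Arguments. Unset Strict Implicit. Unset Printing Implicit Defensive.
Import Order.TTheory GRing.Theory Num.Theory.
Local Open Scope ring_scope.

Definition tr (N : nat) (a : fps) : {poly rat} := \poly_(i < N) a i.

Lemma tr_agree N a k : (k < N)%N -> a k = (tr N a)`_k.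
Proof. by move=> kN; rewrite coef_poly kN. Qed.

Lemma mulE (a b : fps) (p q : {poly rat}) n :
  (forall k, (k <= n)%N -> a k = p`_k) -> (forall k, (k <= n)%N -> b k = q`_k) ->
  fps_mul a b n = (p * q)`_n.
Proof.
move=> ha hb; rewrite /fps_mul coefM; apply: eq_bigr => k _.
rewrite ha ?hb //; first exact: leq_subr.
by rewrite -ltnS.
Qed.

Lemma mul_agree (a b : fps) (p q : {poly rat}) n :
  (forall k, (k <= n)%N -> a k = p`_k) -> (forall k, (k <= n)%N -> b k = q`_k) ->
  forall k, (k <= n)%N -> fps_mul a b k = (p * q)`_k.
Proof.
move=> ha hb k kn; apply: mulE => i ik.
  by apply: ha; apply: leq_trans kn.
by apply: hb; apply: leq_trans kn.
Qed.

Lemma pow_agree (a : fps) (p : {poly rat}) n :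
  (forall k, (k <= n)%N -> a k = p`_k) ->
  forall j k, (k <= n)%N -> fps_pow a j k = (p ^+ j)`_k.
Proof.
move=> ha; elim=> [|j IH] k kn.
  by rewrite /fps_pow /= expr0 coef1; case: (k == 0)%N.
rewrite exprS /fps_pow iterS; apply: (mul_agree ha) => //.
Qed.

Lemma val_pow (p : {poly rat}) : p`_0 = 0 ->
  forall j k, (k < j)%N -> (p ^+ j)`_k = 0.
Proof.
move=> p0; elim=> [//|j IH] k kj.
rewrite exprS coefM big1 // => i _.
case: (posnP i) => [->|ipos]; first by rewrite p0 mul0r.
rewrite IH ?mulr0 //.
have := ltn_ord i; rewrite ltnS => ik.
rewrite ltnS in kj. 
lia.
Qed.

Lemma sum_widen (M K : nat) (G : nat -> rat) : (K <= M)%N ->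
  (forall j, (K <= j)%N -> (j < M)%N -> G j = 0) ->
  \sum_(j < M) G j = \sum_(j < K) G j.
Proof.
move=> KM hG.
rewrite -(big_mkord xpredT) -(big_mkord xpredT) (@big_cat_nat _ _ _ K 0 M _ _ (leq0n K) KM) /=.
rewrite [X in _ + X]big1_seq ?addr0 // => j; rewrite mem_index_iota => /andP[_ /andP[]].
exact: hG.
Qed.

Definition Q (m : nat) : rat :=
  \sum_(j < m.+1) fps_pow fps_expm1 j m / (j`!)%:R.

Lemma e0 N : (tr N fps_expm1)`_0 = 0.
Proof. by rewrite coef_poly; case: N. Qed.

Lemma Epow_agree N j k : (k < N)%N ->
  fps_pow fps_expm1 j k = (tr N fps_expm1 ^+ j)`_k.
Proof.
move=> kN; apply: (pow_agree (n := k)) => // i ik.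
by apply: tr_agree; apply: leq_ltn_trans kN.
Qed.

Lemma Q_sum N M k : (k < N)%N -> (k < M)%N ->
  Q k = \sum_(j < M) (tr N fps_expm1 ^+ j)`_k / (j`!)%:R.
Proof.
move=> kN kM; rewrite (sum_widen (K := k.+1) (G := fun j => (tr N fps_expm1 ^+ j)`_k / (j`!)%:R)) //; last first.
  by move=> j kj _; rewrite val_pow ?mul0r // e0.
by apply: eq_bigr => j _; rewrite (Epow_agree _ kN).
Qed.

Lemma Q_rec m : (m.+1)%:R * Q m.+1 = \sum_(k < m.+1) Q k / ((m - k)`!)%:R.
Proof.
set N := m.+2; set e := tr N fps_expm1.
pose q M := \sum_(j < M) ((j`!)%:R^-1) *: e^+j.
have qc M k : (q M)`_k = \sum_(j < M) (e^+j)`_k / (j`!)%:R.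
  by rewrite coef_sum; apply: eq_bigr => j _; rewrite coefZ mulrC.
have -> : Q m.+1 = (q N)`_m.+1 by rewrite qc (Q_sum (N := N) (M := N)).
have -> : \sum_(k < m.+1) Q k / ((m - k)`!)%:R = (q m.+1 * e^`())`_m.
  rewrite coefM; apply: eq_bigr => k _.
  have km : (k < m.+1)%N := ltn_ord k.
  rewrite qc -(Q_sum (N := N) (M := m.+1)) //; last by apply: leq_trans km _.
  congr (_ * _); rewrite coef_deriv coef_poly.
  have -> : ((m - k).+1 < N)%N by rewrite /N; lia.
  rewrite /fps_expm1 /= factS natrM invfM; field; rewrite ?pnatr_eq0 ?factS //=.
  by rewrite -lt0n fact_gt0 nat1r pnatr_eq0.
rewrite mulr_natl -coef_deriv.
suff -> : (q N)^`() = q m.+1 * e^`() by [].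

rewrite /q linear_sum big_ord_recl /= expr0 linearZ /= derivC scaler0 add0r.
rewrite mulr_suml; apply: eq_bigr => j _.
rewrite linearZ /= deriv_exp /= -scalerAl -scaler_nat scalerA mulrC.
congr (_ *: _); last by rewrite mulrC.
rewrite /bump /= add1n factS natrM invfM mulrA mulfV ?mul1r //.
by rewrite pnatr_eq0.
Qed.
Definition np (T : finType) (A : {set T}) : nat :=
  #|[set P : {set {set T}} | partition P A]|.

Lemma np_fix (T : finType) (A B : {set T}) x : x \in B -> B \subset A ->
  #|[set P : {set {set T}} | partition P A & B \in P]| = np (A :\: B).
Proof.
move=> xB BA.
have BnP : forall P', partition P' (A :\: B) -> B \notin P'.
  move=> P' pP'; apply/negP => BP'.
  have := subsetP (partitionS pP' BP') x xB; by rewrite inE xB.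
have -> : [set P : {set {set T}} | partition P A & B \in P] =
   (fun P' => B |: P') @: [set P' : {set {set T}} | partition P' (A :\: B)].
  apply/setP => P; apply/idP/idP.
  - rewrite inE => /andP[pP BP]; apply/imsetP; exists (P :\ B).
      by rewrite inE; apply: partitionD1.
    by rewrite setD1K.
  - case/imsetP => P' pP' ->; rewrite inE setU11 andbT.
    have eA : B :|: (A :\: B) = A.
      apply/setP => y; rewrite !inE; case yB: (y \in B) => //=.
      by rewrite (subsetP BA).
    rewrite -[X in partition _ X]eA.
    apply: partitionU1.
    - by move: pP'; rewrite inE.
    - by apply/set0Pn; exists x.
    - by rewrite disjoint_subset; apply/subsetP => y; rewrite !inE => ->.
rewrite card_in_imset // => P1 P2; rewrite !inE => p1 p2 e.
by rewrite -(setU1K (BnP _ p1)) -(setU1K (BnP _ p2)) e.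
Qed.

Lemma np_rec (T : finType) (A : {set T}) x : x \in A ->
  np A = \sum_(S in powerset (A :\ x)) np (A :\: (x |: S)).
Proof.
move=> xA.
have one : forall P, partition P A ->
    \sum_(S in powerset (A :\ x)) ((x |: S) \in P : nat) = 1.
  move=> P pP.
  have xc : x \in cover P by rewrite (cover_partition pP).
  set B0 := pblock P x.
  have B0P : B0 \in P by apply: pblock_mem.
  have xB0 : x \in B0 by rewrite mem_pblock.
  have B0A : B0 \subset A by apply: partitionS pP B0P.
  have S0in : B0 :\ x \in powerset (A :\ x).
    by rewrite powersetE; apply/subsetP => y; rewrite !inE => /andP[-> /(subsetP B0A)].
  rewrite (bigD1 _ S0in) /= setD1K // B0P big1 ?addn0 // => S /andP[SA SS0].
  apply/eqP; rewrite eqb0; apply/negP => xSP.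
  have := def_pblock (partition_trivIset pP) xSP (setU11 x S).
  rewrite -/B0 => eB.
  move: SS0; rewrite eB setU1K ?eqxx //.
  apply/negP => xS; have SA' : S \in powerset (A :\ x) := SA.
  move: SA'; rewrite powersetE => /subsetP/(_ x xS); by rewrite !inE eqxx.
rewrite {1}/np -sum1_card.
transitivity (\sum_(P | P \in [set P0 : {set {set T}} | partition P0 A])
   \sum_(S in powerset (A :\ x)) ((x |: S) \in P : nat)).
  by apply: eq_bigr => P; rewrite inE => /one ->.
rewrite exchange_big /=; apply: eq_bigr => S SA.
rewrite -(np_fix (B := x |: S) (setU11 x S)); last first.
  apply/subsetP => y; rewrite !inE => /orP[/eqP-> //|].
  by move: SA; rewrite powersetE => /subsetP H /H; rewrite !inE => /andP[].
rewrite -sum1_card big_mkcond [RHS]big_mkcond /=; apply: eq_bigr => P _.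
by rewrite !inE; case: (partition P A); case: (_ \in P).
Qed.

Definition g (m : nat) : rat := (m`!)%:R * Q m.

Lemma g_rec m : g m.+1 = \sum_(k < m.+1) ('C(m, k))%:R * g (m - k)%N.
Proof.
rewrite (reindex_inj rev_ord_inj) /=.
have -> : \sum_(j < m.+1) ('C(m, rev_ord j))%:R * g (m - rev_ord j)%N
   = \sum_(j < m.+1) (m`!)%:R * (Q j / ((m - j)`!)%:R).
  apply: eq_bigr => j _; rewrite /= subSS.
  have jm : (j <= m)%N by rewrite -ltnS.
  rewrite bin_sub // subKn // /g.
  have := bin_fact jm; move/(congr1 (fun x : nat => x%:R : rat)).
  rewrite !natrM => <-.
  field; by rewrite pnatr_eq0 -lt0n fact_gt0.
by rewrite -mulr_sumr -Q_rec /g factS natrM mulrA [X in X * _ = _]mulrC.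
Qed.

Lemma sum_powerset (T : finType) (D : {set T}) (F : nat -> rat) :
  \sum_(S in powerset D) F #|S| = \sum_(k < #|D|.+1) ('C(#|D|, k))%:R * F k.
Proof.
rewrite (@partition_big _ _ _ _ _ _ _ (fun S : {set T} => inord #|S| : 'I_(#|D|.+1)) xpredT) //=.
apply: eq_bigr => k _.
transitivity (\sum_(S in [set B : {set T} | B \subset D & #|B| == k]) F k).
  apply: eq_big => S.
    rewrite powersetE inE; case SD: (S \subset D) => //=.
    have SD' : (#|S| <= #|D|)%N by apply: subset_leq_card.
    apply/eqP/eqP => [e|e]; first by rewrite -e inordK.
    by apply: val_inj; rewrite /= inordK -?e.
  rewrite powersetE => /andP[SD /eqP <-].
  by rewrite inordK //; apply: subset_leq_card.
by rewrite sumr_const cards_draws mulr_natl.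
Qed.

Lemma g0 : g 0 = 1.
Proof. by rewrite /g /Q big_ord1 /= /fps_pow /= !mul1r invr1. Qed.

Lemma np_val (T : finType) (A : {set T}) : (np A)%:R = g #|A|.
Proof.
have [m] := ubnP #|A|; elim: m T A => // m IH T A.
case: (set_0Vmem A) => [->|[x xA]] Am.
  rewrite cards0 g0 /np.
  have -> : [set P : {set {set T}} | partition P set0] = [set set0].
    by apply/setP => P; rewrite !inE partition_set0.
  by rewrite cards1.
rewrite (np_rec xA) natr_sum.
have cA : #|A| = #|A :\ x|.+1 by rewrite (cardsD1 x A) xA.
transitivity (\sum_(S in powerset (A :\ x)) g (#|A :\ x| - #|S|)%N).
  apply: eq_bigr => S; rewrite powersetE => SA.
  have xS : x \notin S by apply/negP => /(subsetP SA); rewrite !inE eqxx.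
  have e : #|A :\: (x |: S)| = (#|A :\ x| - #|S|)%N.
    rewrite cardsD cA.
    have -> : A :&: (x |: S) = x |: S.
      apply/setP => y; rewrite !inE; case: eqP => [->|_] /=; first by rewrite xA.
      case yS: (y \in S); rewrite ?andbF ?andbT //; move: (subsetP SA y yS); by rewrite !inE => /andP[_ ->].
    by rewrite cardsU1 xS add1n subSS.
  rewrite -e; apply: IH.
  rewrite e; move: Am; rewrite cA; lia.
rewrite (@sum_powerset _ _ (fun k => g (#|A :\ x| - k)%N)) cA g_rec.
done.
Qed.

Lemma bell_g m : (bell m)%:R = g m.
Proof. by rewrite -[m in RHS]card_ord -cardsT -np_val. Qed.

Lemma cancelE (u v : fps) :
  (forall n, fps_mul fps_expm1 u n = fps_mul fps_expm1 v n) -> forall n, u n = v n.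
Proof.
move=> h n; have [N] := ubnP n; elim: N n => // N IH n nN.
have := h n.+1; rewrite /fps_mul big_ord_recl [X in _ = X]big_ord_recl.
rewrite big_ord_recl [X in _ = _ + X]big_ord_recl /=.
have -> : \sum_(i < n) fps_expm1 (bump 0 (bump 0 i)) * u (n.+1 - bump 0 (bump 0 i))%N
  = \sum_(i < n) fps_expm1 (bump 0 (bump 0 i)) * v (n.+1 - bump 0 (bump 0 i))%N.
  apply: eq_bigr => i _; congr (_ * _); apply: IH.
  rewrite /bump /=; have := ltn_ord i; lia.
rewrite /bump /= subn0 subn1 /= /fps_expm1 /= !mul0r !add0r invr1 !mul1r.
by move/addIr.
Qed.

Definition Ffps : fps := fun n => \sum_(j < n.+1) fps_pow fps_expm1 j n / ((j.+1)`!)%:R.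
Definition Hfps : fps := fun k => Q k.+1.

Lemma Q0 : Q 0 = 1.
Proof. by have := g0; rewrite /g mul1r. Qed.

Lemma EF n : fps_mul fps_expm1 Ffps n = Q n - (n == 0)%:R.
Proof.
set N := n.+2; set e := tr N fps_expm1.
pose f := \sum_(j < N) (((j.+1)`!)%:R^-1) *: e^+j.
have fc k : (k <= n)%N -> Ffps k = f`_k.
  move=> kn; rewrite /Ffps coef_sum.
  under [RHS]eq_bigr do rewrite coefZ mulrC.
  rewrite (sum_widen (K := k.+1) (M := N) (G := fun j => (e ^+ j)`_k / ((j.+1)`!)%:R)); last first.
  - by move=> j kj _; rewrite val_pow ?mul0r // e0.
  - by rewrite /N; lia.
  apply: eq_bigr => j _; rewrite (Epow_agree _ (N := N)) //.
  by rewrite /N; lia.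
rewrite (mulE (p := e) (q := f)); last first.
- exact: fc.
- by move=> k kn; apply: tr_agree; rewrite /N; lia.
rewrite (Q_sum (N := N) (M := N.+1)); try (rewrite /N; lia).
rewrite big_ord_recl /= expr0 coef1 /= ?mul1r ?invr1 ?mulr1.
rewrite [_ + _ - _]addrC addKr mulr_sumr coef_sum; apply: eq_bigr => j _.
by rewrite -scalerAr -exprS coefZ mulrC /bump /= add1n.
Qed.

Lemma EHb (B : nat -> rat) (HB : is_bernoulli B) n :
  fps_mul fps_expm1 (fps_mul Hfps (egf B)) n = if n == 0%N then 0 else Q n.
Proof.
set N := n.+1.
have agE : forall k, (k <= n)%N -> fps_expm1 k = (tr N fps_expm1)`_k.
  by move=> k kn; apply: tr_agree.
have agH : forall k, (k <= n)%N -> Hfps k = (tr N Hfps)`_k.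
  by move=> k kn; apply: tr_agree.
have agb : forall k, (k <= n)%N -> egf B k = (tr N (egf B))`_k.
  by move=> k kn; apply: tr_agree.
rewrite (mulE agE (mul_agree agH agb)) mulrCA -(mulE agH (mul_agree agE agb)).
have -> : fps_mul Hfps (fps_mul fps_expm1 (egf B)) n = fps_mul Hfps fps_X n.
  by apply: eq_bigr => k _; rewrite HB.
rewrite (mulE (p := tr N Hfps) (q := 'X)) //; last first.
  by move=> k _; rewrite coefX /fps_X; case: (k == 1)%N.
rewrite coefMX coef_poly /N; clear agE agH agb.
case: n {N} => [//|m] /=; rewrite ifT //; lia.
Qed.

Theorem mainTheorem17 (B : nat -> rat) (HB : is_bernoulli B) (n : nat) :
  bell1 n =
  \sum_(k < n.+1) ('C(n, k))%:R * ((bell k.+1)%:R * B (n - k)%N / (k.+1)%:R).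
Proof.
have FH : forall m, Ffps m = fps_mul Hfps (egf B) m.
  apply: cancelE => m; rewrite EF EHb //; case: m => [|m] /=.
    by rewrite Q0 subrr.
  by rewrite subr0.
have -> : bell1 n = (n`!)%:R * Ffps n by [].
rewrite FH /fps_mul mulr_sumr; apply: eq_bigr => k _.
have kn : (k <= n)%N by rewrite -ltnS.
rewrite bell_g /g /Hfps /egf.
have := bin_fact kn; move/(congr1 (fun x : nat => x%:R : rat)).
move=> h; rewrite -h factS !natrM.
field.
by rewrite nat1r !pnatr_eq0 -!lt0n fact_gt0.
Qed.
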